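(* In any execution of the algorithm described in the context, for every round $r$ there is at most one binary value $b\in\{0,1\}$ for which there exist signed $\mathrm{AUX}[r](b)$ messages from at least $n-t$ different processes.
   Context: Model. There are $n$ processes $p_1,\dots,p_n$ ($i$ is the index of $p_i$) communicating over an asynchronous, reliable, point-to-point network: every pair of processes is connected by a channel, message delays are finite but unbounded, and the network does not lose, duplicate, modify or create messages. ''Broadcast'' means sending the message to every process (including oneself). Messages are signed with unforgeable digital signatures ($\langle m\rangle_j$ denotes message $m$ signed by $p_j$); malformed messages or messages with invalid signatures are ignored. Up to $t$ processes are Byzantine (faulty) and may behave arbitrarily and collude, but cannot forge signatures of other processes; the remaining processes are non-faulty and follow the algorithm. It is assumed that $t<n/3$. Algorithm. Messages are of the form $\mathrm{AUX}[r](v)$ with round $r\in\mathbb{N}$ and $v\in\{0,1\}$, sent as a pair $(\langle \mathrm{AUX}[r](v)\rangle_j,\mathit{proofs})$ where $\mathit{proofs}$ is a set of signed AUX messages. The predicate $\mathsf{is\_valid}(r,est,\mathit{proofs})$ is: if $r=0$ return true; if $r=1$ return true iff $\mathit{proofs}$ contains signed $\mathrm{AUX}[0](est)$ messages from $t+1$ different processes; otherwise let $b=(r-1)\bmod 2$; if $est=b$, return true iff ($r=2$ and $\mathit{proofs}$ contains signed $\mathrm{AUX}[0](b)$ from $t+1$ different processes) or ($\mathit{proofs}$ contains signed $\mathrm{AUX}[r-2](b)$ from $n-t$ different processes); if $est\neq b$, return true iff $\mathit{proofs}$ contains signed $\mathrm{AUX}[r-1](\neg b)$ from $n-t$ different processes.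 Each process $p_i$ with proposal $v_i$ keeps a round counter $r_i$, a set $\mathit{aux\_values}_i$ of signed AUX messages, and timers indexed by naturals (timers $2r$ and $2r+1$ belong to round $r$; starting an already started or expired timer does nothing). It sets $r_i:=0$, $\mathit{aux\_values}_i:=\emptyset$, broadcasts $(\langle\mathrm{AUX}[0](v_i)\rangle_i,\emptyset)$, then repeats forever: (1) $r_i:=r_i+1$; (2) if $i=r_i\bmod n$ (coordinator), run Broadcast; (3) start timer $2r_i$ and wait until it expires; (4) if $i\ne r_i\bmod n$, run Broadcast; (5) wait until $\mathit{aux\_values}_i$ contains round-$r_i$ AUX messages from $n-t$ different processes; (6) start timer $2r_i+1$ and wait until it expires; (7) with $b_i=r_i\bmod 2$, if $\mathit{aux\_values}_i$ contains $\mathrm{AUX}[r_i](b_i)$ from $n-t$ different processes, decide $b_i$ (if not yet decided). Broadcast: let $\mathit{values}_i$ be the set of $v\in\{0,1\}$ such that $\mathsf{is\_valid}(r_i,v,S)$ holds for some $S\subseteq\mathit{aux\_values}_i$; let $bv=(r_i+1)\bmod 2$; if $p_i$ received from $p_{r_i\bmod n}$ a message $(\langle\mathrm{AUX}[r_i](p)\rangle_{r_i\bmod n},\cdot)$ with $p\in\mathit{values}_i$ then $est_i:=p$, else if $bv\in\mathit{values}_i$ then $est_i:=bv$, else $est_i:=\neg bv$; choose $\mathit{proofs}\subseteq\mathit{aux\_values}_i$ with $\mathsf{is\_valid}(r_i,est_i,\mathit{proofs})$ and broadcast $(\langle\mathrm{AUX}[r_i](est_i)\rangle_i,\mathit{proofs})$.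 On receiving $(\langle\mathrm{AUX}[r_j](est_j)\rangle_j,\mathit{proofs})$: if $\mathsf{is\_valid}(r_j,est_j,\mathit{proofs})$, add the signed message and the messages of $\mathit{proofs}$ needed to satisfy the predicate to $\mathit{aux\_values}_i$ (such messages are called valid). Then let $\rho_i$ be the largest round for which $\mathit{aux\_values}_i$ contains messages from $t+1$ different processes, and set every timer with index $\le 2\rho_i$ to expired. *)

(* Defs.v *)
From mathcomp Require Import all_boot.
Set Implicit Arguments. Unset Strict Implicit. Unset Printing Implicit Defensive.

(* Processes are p_1 .. p_n, identified by their index i (1 <= i <= n).
   Binary values are booleans: 0 = false, 1 = true. *)

(* A signed message <AUX[r](v)>_j is the triple (j, r, v). *)
Definition sig := (nat * nat * bool)%type.
Definition signer (s : sig) : nat := s.1.1.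
Definition srnd (s : sig) : nat := s.1.2.
Definition sval (s : sig) : bool := s.2.

(* A sent message: (signed AUX message, proofs). *)
Definition packet := (sig * seq sig)%type.

Definition nsigners (P : pred sig) (S : seq sig) : nat :=
  size (undup [seq signer s | s <- S & P s]).

Definition quorum (k r : nat) (v : bool) (S : seq sig) : bool :=
  k <= nsigners (fun s => (srnd s == r) && (sval s == v)) S.

Definition round_quorum (k r : nat) (S : seq sig) : bool :=
  k <= nsigners (fun s => srnd s == r) S.

Definition bit (x : nat) : bool := x %% 2 == 1.

Definition is_valid (n t r : nat) (est : bool) (proofs : seq sig) : bool :=
  if r == 0 then true
  else if r == 1 then quorum t.+1 0 est proofs
  else let b := bit (r - 1) in
       if est == b then ((r == 2) && quorum t.+1 0 b proofs)
                        || quorum (n - t) (r - 2) b proofs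
       else quorum (n - t) (r - 1) (~~ b) proofs.

(* the messages of proofs needed to satisfy the predicate *)
Definition needed (r : nat) (est : bool) (proofs : seq sig) : seq sig :=
  [seq s <- proofs |
    if r == 0 then false
    else if r == 1 then (srnd s == 0) && (sval s == est)
    else let b := bit (r - 1) in
         if est == b then ((r == 2) && (srnd s == 0) && (sval s == b))
                          || ((srnd s == r - 2) && (sval s == b))
         else (srnd s == r - 1) && (sval s == ~~ b)].

(* program points of a non-faulty process:
   PInit   : before the initial broadcast of AUX[0](v_i)
   PStep1  : at the beginning of an iteration (step (1))
   PWaitT1 : waiting for timer 2r to expire (step (3)), then step (4)
   PWaitQ  : waiting for n-t round-r AUX messages (step (5)), then step (6)
   PWaitT2 : waiting for timer 2r+1 to expire (step (6)), then step (7) *)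
Inductive phase := PInit | PStep1 | PWaitT1 | PWaitQ | PWaitT2.

Record lstate := LState {
  phase_of : phase;
  rnd : nat;
  aux : seq sig;
  rcvd : seq (nat * sig);        (* (sender, signed message) of every received message *)
  started : nat -> Prop;
  expired : nat -> Prop;
  decided : option bool;
  proposal : bool
}.

Record config := Config {
  local : nat -> lstate;
  net : seq (nat * nat * packet);        (* in-transit (sender, receiver, message) *)
  created : seq sig
}.

Definition init_lstate (v : bool) : lstate :=
  LState PInit 0 [::] [::] (fun _ => False) (fun _ => False) None v.

Definition init_config (v : nat -> bool) : config :=
  Config (fun i => init_lstate (v i)) [::] [::].

Definition upd (f : nat -> lstate) (i : nat) (l : lstate) : nat -> lstate :=
  fun j => if j == i then l else f j.

Definition is_proc (n i : nat) : bool := (1 <= i) && (i <= n).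
Definition correct (n : nat) (F : nat -> bool) (i : nat) : bool :=
  is_proc n i && ~~ F i.

Definition sendall (n i : nat) (m : packet) : seq (nat * nat * packet) :=
  [seq (i, j, m) | j <- iota 1 n].

Definition in_values (n t : nat) (l : lstate) (r : nat) (v : bool) : Prop :=
  exists S : seq sig, {subset S <= aux l} /\ is_valid n t r v S.

(* choice of est_i in the Broadcast procedure; the coordinator of round r is
   p_(r mod n) *)
Definition est_choice (n t : nat) (l : lstate) (r : nat) (est : bool) : Prop :=
  let c := r %% n in
  let bv := bit (r + 1) in
  (exists p, (c, (c, r, p)) \in rcvd l /\ in_values n t l r p /\ est = p)
  \/ ((forall p, (c, (c, r, p)) \in rcvd l -> ~ in_values n t l r p)
      /\ (in_values n t l r bv -> est = bv)
      /\ (~ in_values n t l r bv -> est = ~~ bv)).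

Definition bcast_ok (n t : nat) (l : lstate) (r : nat) (est : bool)
  (proofs : seq sig) : Prop :=
  est_choice n t l r est /\ {subset proofs <= aux l} /\ is_valid n t r est proofs.

Definition set_phase_rnd_start (l : lstate) (p : phase) (r : nat) (x : nat) : lstate :=
  LState p r (aux l) (rcvd l) (fun y => started l y \/ y = x) (expired l)
         (decided l) (proposal l).

Definition set_phase (l : lstate) (p : phase) : lstate :=
  LState p (rnd l) (aux l) (rcvd l) (started l) (expired l) (decided l) (proposal l).

Definition do_decide (n t : nat) (l : lstate) : lstate :=
  let b := bit (rnd l) in
  LState PStep1 (rnd l) (aux l) (rcvd l) (started l) (expired l)
    (if (decided l == None) && quorum (n - t) (rnd l) b (aux l)
     then Some b else decided l) (proposal l).

Definition expire (l : lstate) (x : nat) : lstate :=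
  LState (phase_of l) (rnd l) (aux l) (rcvd l) (started l)
         (fun y => expired l y \/ y = x) (decided l) (proposal l).

Definition receive (n t : nat) (l : lstate) (j : nat) (m : packet) : lstate :=
  let aux' := if is_valid n t (srnd m.1) (sval m.1) m.2
              then m.1 :: needed (srnd m.1) (sval m.1) m.2 ++ aux l
              else aux l in
  LState (phase_of l) (rnd l) aux' ((j, m.1) :: rcvd l) (started l)
    (fun x => expired l x \/ exists rho, round_quorum t.+1 rho aux' /\ x <= 2 * rho)
    (decided l) (proposal l).

(* one step of the whole system; F is the set of Byzantine processes *)
Inductive step (n t : nat) (F : nat -> bool) : config -> config -> Prop :=
| st_init c i : correct n F i -> phase_of (local c i) = PInit ->
    let l := local c i in
    let m := ((i, 0, proposal l), [::]) in
    step n t F c (Config (upd (local c) i (set_phase l PStep1))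
                         (net c ++ sendall n i m) (m.1 :: created c))
| st_round_coord c i est proofs : correct n F i ->
    phase_of (local c i) = PStep1 ->
    let l := local c i in let r := (rnd l).+1 in
    i = r %% n ->
    bcast_ok n t l r est proofs ->
    let m := ((i, r, est), proofs) in
    step n t F c (Config (upd (local c) i (set_phase_rnd_start l PWaitT1 r (2 * r)))
                         (net c ++ sendall n i m) (m.1 :: created c))
| st_round_noncoord c i : correct n F i ->
    phase_of (local c i) = PStep1 ->
    let l := local c i in let r := (rnd l).+1 in
    i <> r %% n ->
    step n t F c (Config (upd (local c) i (set_phase_rnd_start l PWaitT1 r (2 * r)))
                         (net c) (created c))
| st_t1_coord c i : correct n F i ->
    phase_of (local c i) = PWaitT1 ->
    let l := local c i in
    expired l (2 * rnd l) -> i = rnd l %% n ->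
    step n t F c (Config (upd (local c) i (set_phase l PWaitQ)) (net c) (created c))
| st_t1_noncoord c i est proofs : correct n F i ->
    phase_of (local c i) = PWaitT1 ->
    let l := local c i in
    expired l (2 * rnd l) -> i <> rnd l %% n ->
    bcast_ok n t l (rnd l) est proofs ->
    let m := ((i, rnd l, est), proofs) in
    step n t F c (Config (upd (local c) i (set_phase l PWaitQ))
                         (net c ++ sendall n i m) (m.1 :: created c))
| st_quorum c i : correct n F i ->
    phase_of (local c i) = PWaitQ ->
    let l := local c i in
    round_quorum (n - t) (rnd l) (aux l) ->
    step n t F c (Config (upd (local c) i
                            (set_phase_rnd_start l PWaitT2 (rnd l) (2 * rnd l).+1))
                         (net c) (created c))
| st_t2 c i : correct n F i ->
    phase_of (local c i) = PWaitT2 ->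
    let l := local c i in
    expired l (2 * rnd l).+1 ->
    step n t F c (Config (upd (local c) i (do_decide n t l)) (net c) (created c))
| st_timer c i x : correct n F i ->
    started (local c i) x ->
    step n t F c (Config (upd (local c) i (expire (local c i) x)) (net c) (created c))
| st_deliver c j k m : (j, k, m) \in net c ->
    step n t F c (Config (if correct n F k
                          then upd (local c) k (receive n t (local c k) j m)
                          else local c)
                         (rem (j, k, m) (net c)) (created c))
| st_byz_sign c j r v : is_proc n j -> F j ->
    step n t F c (Config (local c) (net c) ((j, r, v) :: created c))
| st_byz_send c j k m : is_proc n j -> F j -> is_proc n k ->
    m.1 \in created c -> all (fun s => s \in created c) m.2 ->
    step n t F c (Config (local c) ((j, k, m) :: net c) (created c)).

Inductive reachable (n t : nat) (F : nat -> bool) (v : nat -> bool) : config -> Prop :=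
| reach0 : reachable n t F v (init_config v)
| reachS c c' : reachable n t F v c -> step n t F c c' -> reachable n t F v c'.

(* Main.v *)
Require Import Defs.
From mathcomp Require Import all_boot zify.

Definition Inv (n t : nat) (F : nat -> bool) (c : config) : Prop :=
 (forall s, s \in created c -> is_proc n (signer s)) /\
 forall i, correct n F i ->
  [/\ (phase_of (local c i) = PInit -> forall s, s \in created c -> signer s <> i),
      (forall s, s \in created c -> signer s = i -> srnd s <= rnd (local c i)),
      (phase_of (local c i) = PWaitT1 -> i <> rnd (local c i) %% n ->
         forall s, s \in created c -> signer s = i -> srnd s < rnd (local c i)) &
      (forall s1 s2, s1 \in created c -> s2 \in created c -> signer s1 = i ->
          signer s2 = i -> srnd s1 = srnd s2 -> Defs.sval s1 = Defs.sval s2)].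

Lemma inv0 n t F v : Inv n t F (init_config v).
Proof. by split => // i _; split. Qed.

Lemma invC n t F c L N :
  Inv n t F c ->
  (forall k, correct n F k ->
     [/\ phase_of (L k) = PInit -> phase_of (local c k) = PInit,
         rnd (local c k) <= rnd (L k) &
         phase_of (L k) = PWaitT1 -> k <> rnd (L k) %% n ->
           forall s, s \in created c -> signer s = k -> srnd s < rnd (L k)]) ->
  Inv n t F (Config L N (created c)).
Proof.
move=> [Hp Hi] H; split => //= k Hk.
have [a1 a2 a3 a4] := Hi k Hk; have [b1 b2 b3] := H k Hk.
split => //.
- by move=> /b1; apply: a1.
- by move=> s Hs Hsk; apply: leq_trans (a2 s Hs Hsk) b2.
Qed.

Lemma invS n t F c i l' N r0 e :
  Inv n t F c -> correct n F i ->
  phase_of l' <> PInit ->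
  (forall s, s \in created c -> signer s = i -> srnd s < r0) ->
  r0 <= rnd l' ->
  (phase_of l' = PWaitT1 -> i = rnd l' %% n) ->
  Inv n t F (Config (upd (local c) i l') N ((i, r0, e) :: created c)).
Proof.
move=> [Hp Hi] Hc Hph Hlt Hr Hw; split => /=.
  move=> s; rewrite in_cons => /orP [/eqP -> |]; last exact: Hp.
  by move: Hc => /andP [].
move=> k Hk; rewrite /upd; have [a1 a2 a3 a4] := Hi k Hk.
case: eqP => [Eki | ne]; first subst k.
  split => //.
  - move=> s; rewrite in_cons => /orP [/eqP -> //| Hs Hsi].
    exact: ltnW (leq_trans (Hlt s Hs Hsi) Hr).
  - by move=> /Hw.
  - move=> s1 s2; rewrite !in_cons => /orP [/eqP -> |H1] /orP [/eqP -> |H2] H3 H4 H5 //.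
    + by move: (Hlt s2 H2 H4); rewrite -H5 /srnd /= ltnn.
    + by move: (Hlt s1 H1 H3); rewrite H5 /srnd /= ltnn.
    + exact: a4.
have sk : forall s, s \in (i, r0, e) :: created c -> signer s = k -> s \in created c.
  move=> s; rewrite in_cons => /orP [/eqP -> /= Hki|//].
  by exfalso; apply: ne; rewrite -Hki.
split.
- by move=> /a1 H s Hs Hsk; apply: (H s (sk s Hs Hsk)).
- by move=> s Hs Hsk; apply: a2 (sk s Hs Hsk) Hsk.
- by move=> P1 P2 s Hs Hsk; apply: a3 P1 P2 s (sk s Hs Hsk) Hsk.
- by move=> s1 s2 H1 H2 H3 H4; apply: a4 (sk _ H1 H3) (sk _ H2 H4) H3 H4.
Qed.

Lemma inv_step n t F c c' : Inv n t F c -> step n t F c c' -> Inv n t F c'.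
Proof.
move=> HI st; case: st HI.
- move=> c0 i Hc Hph /= HI; have [_ Hi] := HI; have [a1 _ _ _] := Hi i Hc.
  apply: invS => //=.
  by move=> s Hs Hsi; exfalso; apply: (a1 Hph s Hs Hsi).
- move=> c0 i est proofs Hc Hph /= Hic _ HI; have [_ Hi] := HI; have [_ a2 _ _] := Hi i Hc.
  apply: invS => //= s Hs Hsi; rewrite ltnS; exact: a2.
- move=> c0 i Hc Hph /= Hic HI; have [_ Hi] := HI.
  case: c0 Hc Hph Hic HI Hi => L0 N0 C0 /= Hc Hph Hic HI Hi.
  apply: (@invC n t F (Config L0 N0 C0)) => // k Hk; rewrite /upd.
  case: eqP => [Eki | ne]; last first.
    by have [_ _ a3 _] := Hi k Hk; split.
  subst k; have [_ a2 _ _] := Hi i Hk; split => //=.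
- move=> c0 i Hc Hph /= _ _ HI; have [_ Hi] := HI.
  case: c0 Hc Hph HI Hi => L0 N0 C0 /= Hc Hph HI Hi.
  apply: (@invC n t F (Config L0 N0 C0)) => // k Hk; rewrite /upd.
  case: eqP => [Eki | ne]; last by have [_ _ a3 _] := Hi k Hk; split.
  by subst k; split.
- move=> c0 i est proofs Hc Hph /= _ Hin _ HI; have [_ Hi] := HI; have [_ _ a3 _] := Hi i Hc.
  apply: invS => //= s Hs Hsi; exact: a3.
- move=> c0 i Hc Hph /= _ HI; have [_ Hi] := HI.
  case: c0 Hc Hph HI Hi => L0 N0 C0 /= Hc Hph HI Hi.
  apply: (@invC n t F (Config L0 N0 C0)) => // k Hk; rewrite /upd.
  case: eqP => [Eki | ne]; last by have [_ _ a3 _] := Hi k Hk; split.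
  by subst k; split.
- move=> c0 i Hc Hph /= _ HI; have [_ Hi] := HI.
  case: c0 Hc Hph HI Hi => L0 N0 C0 /= Hc Hph HI Hi.
  apply: (@invC n t F (Config L0 N0 C0)) => // k Hk; rewrite /upd.
  case: eqP => [Eki | ne]; last by have [_ _ a3 _] := Hi k Hk; split.
  by subst k; split.
- move=> c0 i x Hc _ HI; have [_ Hi] := HI.
  case: c0 Hc HI Hi => L0 N0 C0 /= Hc HI Hi.
  apply: (@invC n t F (Config L0 N0 C0)) => // k Hk; rewrite /upd.
  case: eqP => [Eki | ne]; last by have [_ _ a3 _] := Hi k Hk; split.
  by subst k; have [_ _ a3 _] := Hi i Hk; split.
- move=> c0 j k m _ HI; have [_ Hi] := HI.
  case: c0 HI Hi => L0 N0 C0 /= HI Hi.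
  apply: (@invC n t F (Config L0 N0 C0)) => // k' Hk'.
  case: ifP => _; last by have [_ _ a3 _] := Hi k' Hk'; split.
  rewrite /upd; case: eqP => [Eki | ne]; last by have [_ _ a3 _] := Hi k' Hk'; split.
  by subst k'; have [_ _ a3 _] := Hi k Hk'; split.
- move=> c0 j r v0 Hpj Fj [Hp Hi]; split => /=.
    by move=> s; rewrite in_cons => /orP [/eqP -> //|]; apply: Hp.
  move=> k Hk; have [a1 a2 a3 a4] := Hi k Hk.
  have Hjk : j <> k by move=> E; move: Hk; rewrite /correct -E Fj andbF.
  have sk : forall s, s \in (j, r, v0) :: created c0 -> signer s = k -> s \in created c0.
    by move=> s; rewrite in_cons => /orP [/eqP -> /= Hki|//].
  split.
  + by move=> /a1 H s Hs Hsk; apply: (H s (sk s Hs Hsk)).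
  + by move=> s Hs Hsk; apply: a2 (sk s Hs Hsk) Hsk.
  + by move=> P1 P2 s Hs Hsk; apply: a3 P1 P2 s (sk s Hs Hsk) Hsk.
  + by move=> s1 s2 H1 H2 H3 H4; apply: a4 (sk _ H1 H3) (sk _ H2 H4) H3 H4.
- by move=> c0 j k m _ _ _ _ _ [Hp Hi]; split.
Qed.

Lemma inv_reach n t F v c : reachable n t F v c -> Inv n t F c.
Proof. elim=> [|c1 c2 _ IH st]; [exact: inv0 | exact: inv_step IH st]. Qed.

Lemma inter_size (A B U : seq nat) : uniq A -> uniq B ->
  {subset A <= U} -> {subset B <= U} ->
  size A + size B <= size U + count (mem A) B.
Proof.
move=> uA uB sA sB.
have := count_predC (mem A) B; move=> HB.
have : size (A ++ [seq x <- B | x \notin A]) <= size U.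
  apply: uniq_leq_size.
    rewrite cat_uniq uA filter_uniq //= andbT; apply/hasPn => x.
    by rewrite mem_filter => /andP [].
  move=> x; rewrite mem_cat mem_filter => /orP [/sA //| /andP [_ /sB //]].
rewrite size_cat size_filter.
have -> : count (fun x => x \notin A) B = count (predC (mem A)) B by []. move=> H.
by rewrite -HB addnCA addnC leq_add2r.
Qed.

Theorem lemma1 (n t : nat) (F : nat -> bool) (v : nat -> bool) (c : config) :
  3 * t < n ->
  count F (iota 1 n) <= t ->
  reachable n t F v c ->
  forall (r : nat) (b1 b2 : bool),
    quorum (n - t) r b1 (created c) ->
    quorum (n - t) r b2 (created c) ->
    b1 = b2.
Proof.
move=> H3 HF /inv_reach [Hp Hi] r b1 b2.
rewrite /quorum /nsigners.
set A := undup _; set B := undup _ => qA qB.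
apply/eqP/negPn/negP => Hne.
have sub : forall b, {subset undup [seq signer s | s <- created c & (srnd s == r) && (Defs.sval s == b)] <= iota 1 n}.
  move=> b x; rewrite mem_undup => /mapP [s]; rewrite mem_filter => /andP [_ Hs] ->.
  by have := Hp s Hs; rewrite mem_iota /is_proc => /andP [h1 h2]; apply/andP; split; lia.
have Hsz := @inter_size _ _ _ (undup_uniq _) (undup_uniq _) (sub b1) (sub b2).
rewrite size_iota -/A -/B in Hsz.
case Hx: (has (fun x => (x \in A) && ~~ F x) B).
  move/hasP: Hx => [x xB /andP [xA nFx]].
  move: xA; rewrite mem_undup => /mapP [s1]; rewrite mem_filter => /andP [/andP [/eqP r1 /eqP v1] H1] e1.
  move: xB; rewrite mem_undup => /mapP [s2]; rewrite mem_filter => /andP [/andP [/eqP r2 /eqP v2] H2] e2.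
  have Hc : correct n F x.
    by rewrite /correct nFx andbT; rewrite e1; apply: Hp.
  have [_ _ _ a4] := Hi x Hc.
  have := a4 s1 s2 H1 H2 (esym e1) (esym e2) (etrans r1 (esym r2)).
  by rewrite v1 v2 => /eqP; rewrite (negbTE Hne).
move/hasPn: Hx => Hx.
have : count (mem A) B <= t.
  apply: leq_trans HF; rewrite -size_filter -size_filter.
  apply: uniq_leq_size; first by rewrite filter_uniq // undup_uniq.
  move=> x; rewrite !mem_filter => /andP [xA xB]; have := Hx x xB.
  move/negP => H; apply/andP; split; last exact: (sub b2 x xB).
  by apply/negPn/negP => nF; apply: H; rewrite nF andbT; exact: xA.
move=> Ht; have H6 := leq_trans (leq_trans (leq_add qA qB) Hsz) (leq_add (leqnn n) Ht).
move: H6 H3; clear; lia.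
Qed.
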